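(* Let $N\in\mathbb{N}$, $a_1,\dots,a_N\in\mathbb{C}\setminus\{0\}$, $z_1,\dots,z_N\in\mathbb{D}:=\{z\in\mathbb{C}:0<|z|<1\}$ pairwise distinct, and $\mathbf f=(f_k)_{k=0}^\infty$ with $f_k=\sum_{j=1}^N a_jz_j^k$. Let $\sigma_l$, $l\in\{0,\dots,N-1\}$, be a nonzero singular value of $\mathbf\Gamma_{\mathbf f}=(f_{k+j})_{k,j\ge0}$ of multiplicity one, and let $\mathbf v^{(l)}=(v^{(l)}_k)_{k\ge0}\in\ell^2\setminus\{0\}$ be a corresponding con-eigenvector, i.e. $\mathbf\Gamma_{\mathbf f}\overline{\mathbf v^{(l)}}=\sigma_l\mathbf v^{(l)}$. Then $$v^{(l)}_k=\frac{1}{\sigma_l}\sum_{j=1}^N a_j\,P_{\overline{\mathbf v^{(l)}}}(z_j)\,z_j^k,\qquad k\in\mathbb{N}_0,$$ where $P_{\overline{\mathbf v^{(l)}}}(z_j)=\overline{P_{\mathbf v^{(l)}}(\overline{z_j})}$, and the vector $\mathbf y=(y_r)_{r=1}^N:=(P_{\mathbf v^{(l)}}(\overline{z_r}))_{r=1}^N$ satisfies the finite con-eigenvalue system $$\sigma_l\,y_r=\sum_{j=1}^N\frac{a_j}{1-z_j\overline{z_r}}\,\overline{y_j},\qquad r=1,\dots,N.$$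
   Context: $\mathbf\Gamma_{\mathbf f}$ acts on $\ell^2(\mathbb{N}_0)$ by $(\mathbf\Gamma_{\mathbf f}\mathbf v)_k=\sum_{j\ge0}f_{k+j}v_j$. $\overline{\mathbf v}$ is the componentwise conjugate. For $\mathbf v\in\ell^2$, $P_{\mathbf v}(z)=\sum_{k\ge0}v_kz^k$ for $|z|<1$. *)

(* Defs.v *)
From Stdlib Require Import Reals.
From Coquelicot Require Import Coquelicot.
Open Scope R_scope.

(* Sum of a complex series (total operator): real and imaginary parts summed
   separately; equals the true sum whenever the series converges. *)
Definition CSeries (a : nat -> C) : C :=
  (Series (fun n => fst (a n)), Series (fun n => snd (a n))).

Fixpoint csum (n : nat) (g : nat -> C) : C :=
  match n with
  | O => 0%C
  | S m => (csum m g + g m)%C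
  end.

Definition l2 (v : nat -> C) : Prop := ex_series (fun k => (Cmod (v k)) ^ 2).

Definition vconj (v : nat -> C) : nat -> C := fun k => Cconj (v k).

Definition hankel (f v : nat -> C) : nat -> C :=
  fun k => CSeries (fun j => (f (k + j)%nat * v j)%C).

Definition hankel_adj (f w : nat -> C) : nat -> C :=
  fun k => CSeries (fun j => (Cconj (f (k + j)%nat) * w j)%C).

Definition Pgen (v : nat -> C) (z : C) : C :=
  CSeries (fun k => (v k * z ^ k)%C).

Definition sv_space (f : nat -> C) (s : R) (u : nat -> C) : Prop :=
  l2 u /\ forall k, hankel_adj f (hankel f u) k = (RtoC (s ^ 2) * u k)%C.

Definition simple_nonzero_singular_value (f : nat -> C) (s : R) : Prop :=
  0 < s /\
  exists w, sv_space f s w /\ (exists k, w k <> 0%C) /\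
    forall u, sv_space f s u -> exists c : C, forall k, u k = (c * w k)%C.

(* Main.v *)
Require Import Defs.
From Stdlib Require Import Reals Lra Lia.
From Coquelicot Require Import Coquelicot.
Open Scope R_scope.

Definition cis (a : nat -> C) (l : C) : Prop :=
  is_series (fun n => fst (a n)) (fst l) /\ is_series (fun n => snd (a n)) (snd l).

Lemma cis_unique a l : cis a l -> CSeries a = l.
Proof.
  intros [H1 H2]. unfold CSeries. rewrite (is_series_unique _ _ H1), (is_series_unique _ _ H2).
  destruct l; reflexivity.
Qed.

Lemma cis_ext a b l : (forall n, a n = b n) -> cis a l -> cis b l.
Proof.
  intros E [H1 H2]; split; eapply is_series_ext; try eassumption; intros n; simpl; rewrite E; reflexivity.
Qed.

Lemma cis_plus a b la lb : cis a la -> cis b lb ->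
  cis (fun n => (a n + b n)%C) (la + lb)%C.
Proof.
  intros [H1 H2] [H3 H4]; split.
  - exact (is_series_plus _ _ _ _ H1 H3).
  - exact (is_series_plus _ _ _ _ H2 H4).
Qed.

Lemma cis_scal c a l : cis a l -> cis (fun n => (c * a n)%C) (c * l)%C.
Proof.
  intros [H1 H2]; split; simpl.
  - apply (is_series_minus _ _ _ _ (is_series_scal_l (fst c) _ _ H1) (is_series_scal_l (snd c) _ _ H2)).
  - apply (is_series_plus _ _ _ _ (is_series_scal_l (fst c) _ _ H2) (is_series_scal_l (snd c) _ _ H1)).
Qed.

Lemma ser_lim (a : nat -> R) (l : R) : is_lim_seq (sum_n a) l -> is_series a l.
Proof. intros H. exact H. Qed.

Lemma cis_zero : cis (fun _ => 0%C) 0%C.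
Proof.
  split; simpl; apply ser_lim; apply (is_lim_seq_ext (fun _ => 0));
  try (intros n; rewrite sum_n_const; simpl; ring); apply is_lim_seq_const.
Qed.

Lemma cis_csum N (g : nat -> nat -> C) l :
  (forall i, (i < N)%nat -> cis (g i) (l i)) ->
  cis (fun k => csum N (fun i => g i k)) (csum N l).
Proof.
  induction N; intros H; simpl.
  - apply cis_zero.
  - apply cis_plus; [apply IHN; intros; apply H; lia | apply H; lia].
Qed.

Lemma csum_pow_geom (w : C) n : (csum n (fun k => w ^ k) * (1 - w) = 1 - w ^ n)%C.
Proof.
  induction n; simpl. ring. rewrite Cmult_plus_distr_r, IHn. ring.
Qed.

Lemma sum_n_fst (g : nat -> C) n : sum_n (fun k => fst (g k)) n = fst (csum (S n) g).
Proof.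
  induction n. rewrite sum_O. simpl. ring.
  rewrite sum_Sn, IHn. change (csum (S (S n)) g) with (csum (S n) g + g (S n))%C. simpl. reflexivity.
Qed.

Lemma sum_n_snd (g : nat -> C) n : sum_n (fun k => snd (g k)) n = snd (csum (S n) g).
Proof.
  induction n. rewrite sum_O. simpl. ring.
  rewrite sum_Sn, IHn. change (csum (S (S n)) g) with (csum (S n) g + g (S n))%C. simpl. reflexivity.
Qed.

Lemma pow_fst_0 (w : C) : Cmod w < 1 -> is_lim_seq (fun n => fst (w ^ n)%C) 0.
Proof.
  intros Hw.
  assert (Hg : is_lim_seq (fun n => Cmod w ^ n) 0).
  { apply is_lim_seq_geom. rewrite Rabs_pos_eq; [lra | apply Cmod_ge_0]. }
  apply (is_lim_seq_le_le (fun n => - (Cmod w ^ n)) _ (fun n => Cmod w ^ n)).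
  - intros n. pose proof (Rmax_Cmod (w ^ n)%C) as M. rewrite Cmod_pow in M.
    pose proof (Rmax_l (Rabs (fst (w ^ n)%C)) (Rabs (snd (w ^ n)%C))).
    pose proof (Rabs_le_between (fst (w ^ n)%C) (Cmod w ^ n)) as [A _]. apply A. lra.
  - replace (Finite 0) with (Rbar_opp 0) by (simpl; f_equal; ring). apply (proj1 (is_lim_seq_opp _ _)). exact Hg.
  - exact Hg.
Qed.

Lemma pow_snd_0 (w : C) : Cmod w < 1 -> is_lim_seq (fun n => snd (w ^ n)%C) 0.
Proof.
  intros Hw.
  assert (Hg : is_lim_seq (fun n => Cmod w ^ n) 0).
  { apply is_lim_seq_geom. rewrite Rabs_pos_eq; [lra | apply Cmod_ge_0]. }
  apply (is_lim_seq_le_le (fun n => - (Cmod w ^ n)) _ (fun n => Cmod w ^ n)).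
  - intros n. pose proof (Rmax_Cmod (w ^ n)%C) as M. rewrite Cmod_pow in M.
    pose proof (Rmax_r (Rabs (fst (w ^ n)%C)) (Rabs (snd (w ^ n)%C))).
    pose proof (Rabs_le_between (snd (w ^ n)%C) (Cmod w ^ n)) as [A _]. apply A. lra.
  - replace (Finite 0) with (Rbar_opp 0) by (simpl; f_equal; ring). apply (proj1 (is_lim_seq_opp _ _)). exact Hg.
  - exact Hg.
Qed.

Lemma lim_scal (u : nat -> R) (a l : R) : is_lim_seq u l -> is_lim_seq (fun n => u n * a) (l * a).
Proof. intros H. exact (is_lim_seq_scal_r u a l H). Qed.

Lemma cis_geom (w : C) : Cmod w < 1 -> cis (fun k => w ^ k)%C (/ (1 - w))%C.
Proof.
  intros Hw.
  assert (Hne : (1 - w)%C <> 0%C).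
  { intros E. assert (w = 1%C) as ->. { replace w with (1 - (1 - w))%C by ring. rewrite E. ring. }
    rewrite Cmod_1 in Hw. lra. }
  assert (Hs : forall n, csum (S n) (fun k => w ^ k)%C = (/ (1 - w) - w ^ (S n) * / (1 - w))%C).
  { intros n. replace (/ (1 - w) - w ^ (S n) * / (1 - w))%C with ((1 - w ^ (S n)) * / (1 - w))%C by ring.
    rewrite <- (csum_pow_geom w (S n)). field. exact Hne. }
  set (d := (/ (1 - w))%C).
  pose proof (proj1 (is_lim_seq_incr_1 _ _) (pow_fst_0 w Hw)) as F.
  pose proof (proj1 (is_lim_seq_incr_1 _ _) (pow_snd_0 w Hw)) as G.
  split; apply ser_lim.
  - apply (is_lim_seq_ext (fun n => fst d - (fst (w ^ S n)%C * fst d - snd (w ^ S n)%C * snd d))).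
    { intros n. rewrite sum_n_fst, Hs. fold d. simpl. ring. }
    pose proof (is_lim_seq_minus' _ _ _ _ (is_lim_seq_const (fst d))
      (is_lim_seq_minus' _ _ _ _ (lim_scal _ (fst d) _ F) (lim_scal _ (snd d) _ G))) as L.
    replace (fst d - (0 * fst d - 0 * snd d)) with (fst d) in L by ring. exact L.
  - apply (is_lim_seq_ext (fun n => snd d - (fst (w ^ S n)%C * snd d + snd (w ^ S n)%C * fst d))).
    { intros n. rewrite sum_n_snd, Hs. fold d. simpl. ring. }
    pose proof (is_lim_seq_minus' _ _ _ _ (is_lim_seq_const (snd d))
      (is_lim_seq_plus' _ _ _ _ (lim_scal _ (snd d) _ F) (lim_scal _ (fst d) _ G))) as L.
    replace (snd d - (0 * snd d + 0 * fst d)) with (snd d) in L by ring. exact L.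
Qed.

Lemma bound_lemma (x : C) (u : C) (z : C) k : x = (u * z ^ k)%C ->
  Rabs (fst x) <= (Cmod u ^ 2 + (Cmod z ^ 2) ^ k) / 2 /\
  Rabs (snd x) <= (Cmod u ^ 2 + (Cmod z ^ 2) ^ k) / 2.
Proof.
  intros ->. pose proof (Rmax_Cmod (u * z ^ k)%C) as M.
  rewrite Cmod_mult, Cmod_pow in M.
  pose proof (Rmax_l (Rabs (fst (u * z ^ k)%C)) (Rabs (snd (u * z ^ k)%C))).
  pose proof (Rmax_r (Rabs (fst (u * z ^ k)%C)) (Rabs (snd (u * z ^ k)%C))).
  rewrite <- pow_mult. replace (2 * k)%nat with (k * 2)%nat by lia. rewrite pow_mult.
  pose proof (pow2_ge_0 (Cmod u - Cmod z ^ k)).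
  split; nra.
Qed.

Lemma cis_conv (u : nat -> C) (z : C) : l2 u -> Cmod z < 1 ->
  cis (fun k => (u k * z ^ k)%C) (CSeries (fun k => (u k * z ^ k)%C)).
Proof.
  intros Hu Hz.
  assert (Hb : ex_series (fun k => (Cmod (u k) ^ 2 + (Cmod z ^ 2) ^ k) / 2)).
  { apply (ex_series_ext (fun k => scal (/2) (plus (Cmod (u k) ^ 2) ((Cmod z ^ 2) ^ k)))).
    { intros k. unfold scal, plus; simpl. unfold mult; simpl. change (AbelianMonoid.plus _) with Rplus. unfold Rdiv. ring. }
    apply (ex_series_scal (K:=R_AbsRing) (V:=R_NormedModule)). apply (ex_series_plus (K:=R_AbsRing) (V:=R_NormedModule)). exact Hu. apply ex_series_geom.
    pose proof (Cmod_ge_0 z). rewrite Rabs_pos_eq by nra. nra. }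
  split; apply Series_correct; apply ex_series_Rabs;
  (eapply (ex_series_le (K:=R_AbsRing) (V:=R_CompleteNormedModule)); [ | exact Hb]); intros k; unfold norm; simpl; unfold abs; simpl;
  rewrite Rabs_Rabsolu; edestruct (bound_lemma (u k * z ^ k)%C (u k) z k eq_refl); eassumption.
Qed.


Lemma cis_lim a l l' : cis a l -> l = l' -> cis a l'.
Proof. intros H ->; exact H. Qed.

Lemma csum_ext N g h : (forall i, g i = h i) -> csum N g = csum N h.
Proof. intros E; induction N; simpl; [reflexivity | rewrite IHN, E; reflexivity]. Qed.

Lemma csum_mult_r N g x : (csum N g * x = csum N (fun i => g i * x))%C.
Proof. induction N; simpl. ring. rewrite <- IHN. ring. Qed.

Lemma part2 v w : Pgen (vconj v) w = Cconj (Pgen v (Cconj w)).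
Proof.
  unfold Pgen, CSeries, Cconj at 1. simpl. f_equal.
  - apply Series_ext. intros k. rewrite <- Cpow_conj. unfold vconj.
    destruct (v k) as [p q]; destruct (w ^ k)%C as [x y]. simpl. ring.
  - rewrite <- Series_opp. apply Series_ext. intros k. rewrite <- Cpow_conj. unfold vconj.
    destruct (v k) as [p q]; destruct (w ^ k)%C as [x y]. simpl. ring.
Qed.

Theorem theorem3p2
  (N : nat) (a z : nat -> C)
  (Ha : forall j, (j < N)%nat -> a j <> 0%C)
  (Hz : forall j, (j < N)%nat -> 0 < Cmod (z j) < 1)
  (Hdist : forall i j, (i < N)%nat -> (j < N)%nat -> i <> j -> z i <> z j)
  (f : nat -> C)
  (Hf : forall k, f k = csum N (fun j => (a j * z j ^ k)%C))
  (sigma : R)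
  (Hsigma : simple_nonzero_singular_value f sigma)
  (v : nat -> C)
  (Hv : l2 v) (Hv0 : exists k, v k <> 0%C)
  (Hcon : forall k, hankel f (vconj v) k = (RtoC sigma * v k)%C) :
  (forall k,
     v k = (/ RtoC sigma *
            csum N (fun j => a j * Pgen (vconj v) (z j) * z j ^ k))%C)
  /\ (forall j, (j < N)%nat ->
        Pgen (vconj v) (z j) = Cconj (Pgen v (Cconj (z j))))
  /\ (forall r, (r < N)%nat ->
        (RtoC sigma * Pgen v (Cconj (z r)))%C =
        csum N (fun j => a j / (1 - z j * Cconj (z r))
                         * Cconj (Pgen v (Cconj (z j))))%C).
Proof.
  destruct Hsigma as [Hs0 _].
  assert (Hsne : RtoC sigma <> 0%C).
  { intros E. apply (f_equal fst) in E. simpl in E. lra. }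
  assert (Hvc : l2 (vconj v)).
  { unfold l2 in *. eapply ex_series_ext; [ | exact Hv]. intros k. simpl. unfold vconj. rewrite Cmod_conj. reflexivity. }
  assert (Hconv : forall i, (i < N)%nat ->
            cis (fun j => (vconj v j * z i ^ j)%C) (Pgen (vconj v) (z i))).
  { intros i Hi. apply cis_conv; [exact Hvc | apply Hz; exact Hi]. }
  assert (Key : forall k, (RtoC sigma * v k)%C =
            csum N (fun i => a i * Pgen (vconj v) (z i) * z i ^ k)%C).
  { intros k. rewrite <- Hcon. unfold hankel. apply cis_unique.
    apply (cis_ext (fun j => csum N (fun i => (a i * z i ^ k) * (vconj v j * z i ^ j))%C)).
    { intros j. rewrite Hf, csum_mult_r. apply csum_ext. intros i. rewrite Cpow_add_r. ring. }
    eapply cis_lim. apply cis_csum. intros i Hi. apply cis_scal. apply Hconv. exact Hi.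
    apply csum_ext. intros i. ring. }
  split; [ | split].
  - intros k. rewrite <- Key. field. exact Hsne.
  - intros j _. apply part2.
  - intros r Hr. set (c := Cconj (z r)).
    assert (Hc : Cmod c < 1) by (unfold c; rewrite Cmod_conj; apply Hz; exact Hr).
    assert (H1 : cis (fun k => (RtoC sigma * (v k * c ^ k))%C) (RtoC sigma * Pgen v c)%C).
    { apply cis_scal. apply cis_conv; assumption. }
    assert (H2 : cis (fun k => (RtoC sigma * (v k * c ^ k))%C)
                   (csum N (fun j => (a j * Pgen (vconj v) (z j)) * / (1 - z j * c)))%C).
    { apply (cis_ext (fun k => csum N (fun j => (a j * Pgen (vconj v) (z j)) * (z j * c) ^ k))%C).
      { intros k. rewrite Cmult_assoc, Key, csum_mult_r. apply csum_ext. intros i.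
        rewrite Cpow_mult_l. ring. }
      apply cis_csum. intros i Hi. apply cis_scal. apply cis_geom.
      rewrite Cmod_mult. unfold c. rewrite Cmod_conj.
      pose proof (Hz i Hi). pose proof (Hz r Hr). nra. }
    rewrite <- (cis_unique _ _ H1), (cis_unique _ _ H2).
    apply csum_ext. intros j. rewrite part2. unfold Cdiv. ring.
Qed.
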